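(* Let $n,m\ge1$, $a\in\mathbb{R}^n$, $d\in\mathbb{R}^m$ with $\|a\|=1\ge\|d\|$, $S_{\le0}=\{(x,y)\in\mathbb{R}^{n+m}:\|x\|\le\|y\|,\ a^\mathsf{T} x+d^\mathsf{T} y\le0\}$, $\lambda\in\mathbb{R}^n$ with $\|\lambda\|=1$, and $\phi_\lambda(y)=\max_x\{\lambda^\mathsf{T} x:(x,y)\in S_{\le0}\}$ for $y\in\mathbb{R}^m$. Then $C^\phi_\lambda=\{(x,y)\in\mathbb{R}^{n+m}:\phi_\lambda(y)\le\lambda^\mathsf{T} x\}$ is maximal $S_{\le0}$-free. Additionally, if $(\bar x,\bar y)\notin S_{\le0}$ satisfies $a^\mathsf{T}\bar x+d^\mathsf{T}\bar y\le0$ and $\lambda=\bar x/\|\bar x\|$, then $(\bar x,\bar y)\in\operatorname{int}(C^\phi_\lambda)$.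
   Context: $\|\cdot\|$ is the Euclidean norm. A convex set $C$ is $S$-free if $\operatorname{int}(C)\cap S=\emptyset$, and maximal $S$-free if it is $S$-free and no $S$-free convex set strictly contains it. *)

(* Defs.v *)
From HB Require Import structures.
From mathcomp Require Import all_boot all_order all_algebra.
From mathcomp Require Import all_classical all_reals all_analysis.
Set Implicit Arguments. Unset Strict Implicit. Unset Printing Implicit Defensive.
Import Order.TTheory GRing.Theory Num.Theory.
Import numFieldNormedType.Exports.
Local Open Scope classical_set_scope.
Local Open Scope ring_scope.

Definition dotv (R : realType) (k : nat) (u v : 'rV[R]_k) : R :=
  \sum_(i < k) u ord0 i * v ord0 i.
Definition enorm (R : realType) (k : nat) (u : 'rV[R]_k) : R :=
  Num.sqrt (dotv u u).

Definition Sle0 (R : realType) (n m : nat) (a : 'rV[R]_n) (d : 'rV[R]_m)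
  : set ('rV[R]_n * 'rV[R]_m) :=
  [set p | enorm p.1 <= enorm p.2 /\ dotv a p.1 + dotv d p.2 <= 0].

(* phi_lambda(y) = max { lambda^T x : (x,y) in S_{<=0} }  (the set is nonempty
   and compact, so the supremum is attained and equals the maximum). *)
Definition phi (R : realType) (n m : nat) (a : 'rV[R]_n) (d : 'rV[R]_m)
  (lam : 'rV[R]_n) (y : 'rV[R]_m) : R :=
  sup [set dotv lam x | x in [set x | Sle0 a d (x, y)]].

Definition Cphi (R : realType) (n m : nat) (a : 'rV[R]_n) (d : 'rV[R]_m)
  (lam : 'rV[R]_n) : set ('rV[R]_n * 'rV[R]_m) :=
  [set p | phi a d lam p.2 <= dotv lam p.1].

Definition Sfree (R : realType) (n m : nat) (S C : set ('rV[R]_n * 'rV[R]_m)) :=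
  convex_set (C : set (convex_lmodType ('rV[R]_n * 'rV[R]_m)%type))
  /\ interior C `&` S = set0.

Definition maxSfree (R : realType) (n m : nat) (S C : set ('rV[R]_n * 'rV[R]_m)) :=
  Sfree S C /\ forall C', Sfree S C' -> C `<=` C' -> C' = C.

(* Main.v *)
Require Import Defs.
From HB Require Import structures.
From mathcomp Require Import all_boot all_order all_algebra.
From mathcomp Require Import all_classical all_reals all_analysis.
From mathcomp Require Import ring lra.
Import Order.TTheory GRing.Theory Num.Theory.
Import numFieldNormedType.Exports.
Local Open Scope classical_set_scope.
Local Open Scope ring_scope.

Section Vec.
Context {R : realType}.

Lemma dotvC {k} (u v : 'rV[R]_k) : dotv u v = dotv v u.
Proof. by apply: eq_bigr => i _; rewrite mulrC. Qed.

Lemma dotvDl {k} (u v w : 'rV[R]_k) : dotv (u + v) w = dotv u w + dotv v w.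
Proof. by rewrite /dotv -big_split; apply: eq_bigr => i _; rewrite !mxE mulrDl. Qed.

Lemma dotvZl {k} (c : R) (u v : 'rV[R]_k) : dotv (c *: u) v = c * dotv u v.
Proof. by rewrite /dotv mulr_sumr; apply: eq_bigr => i _; rewrite !mxE mulrA. Qed.

Lemma dotvDr {k} (u v w : 'rV[R]_k) : dotv w (u + v) = dotv w u + dotv w v.
Proof. by rewrite dotvC dotvDl !(dotvC w). Qed.

Lemma dotvZr {k} (c : R) (u v : 'rV[R]_k) : dotv v (c *: u) = c * dotv v u.
Proof. by rewrite dotvC dotvZl dotvC. Qed.

Lemma dotvNl {k} (u v : 'rV[R]_k) : dotv (- u) v = - dotv u v.
Proof. by rewrite -scaleN1r dotvZl mulN1r. Qed.

Lemma dotvNr {k} (u v : 'rV[R]_k) : dotv v (- u) = - dotv v u.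
Proof. by rewrite dotvC dotvNl dotvC. Qed.

Lemma dotvBl {k} (u v w : 'rV[R]_k) : dotv (u - v) w = dotv u w - dotv v w.
Proof. by rewrite dotvDl dotvNl. Qed.

Lemma dotvBr {k} (u v w : 'rV[R]_k) : dotv w (u - v) = dotv w u - dotv w v.
Proof. by rewrite dotvDr dotvNr. Qed.

Lemma dotv0l {k} (v : 'rV[R]_k) : dotv 0 v = 0.
Proof. by rewrite -(scale0r 0) dotvZl mul0r. Qed.

Lemma dotvv_ge0 {k} (u : 'rV[R]_k) : 0 <= dotv u u.
Proof. by apply: sumr_ge0 => i _; rewrite -expr2 sqr_ge0. Qed.

Lemma enorm_ge0 {k} (u : 'rV[R]_k) : 0 <= enorm u.
Proof. exact: sqrtr_ge0. Qed.

Lemma enorm_sq {k} (u : 'rV[R]_k) : enorm u ^+ 2 = dotv u u.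
Proof. by rewrite sqr_sqrtr // dotvv_ge0. Qed.

Lemma quad_cs (A B C : R) : 0 <= C ->
  (forall x, 0 <= A + 2 * x * B + x ^+ 2 * C) -> B ^+ 2 <= A * C.
Proof.
move=> C0 h; have A0 : 0 <= A by have := h 0; rewrite !(mul0r, mulr0, expr0n, addr0).
have [Cp|] := ltrP 0 C.
  have := h (- B / C).
  have -> : A + 2 * (- B / C) * B + (- B / C) ^+ 2 * C = A - B ^+ 2 / C.
    by field; rewrite gt_eqF.
  by rewrite subr_ge0 ler_pdivrMr.
move=> Cle; have C00 : C = 0 by apply/eqP; rewrite eq_le Cle C0.
have [B0|Bn] := eqVneq B 0; first by rewrite B0 expr0n /= C00 mulr0.
have := h (- (A + 1) / (2 * B)).
have -> : A + 2 * (- (A + 1) / (2 * B)) * B + (- (A + 1) / (2 * B)) ^+ 2 * C = -1.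
  by rewrite C00; field; rewrite Bn.
by rewrite ler0N1.
Qed.

Lemma cs_dot {k} (u v : 'rV[R]_k) : dotv u v ^+ 2 <= dotv u u * dotv v v.
Proof.
apply: quad_cs; first exact: dotvv_ge0.
move=> x; have := dotvv_ge0 (u + x *: v).
rewrite !(dotvDl, dotvDr, dotvZl, dotvZr) (dotvC v u).
by move=> h; apply: (le_trans h); rewrite le_eqVlt; apply/orP; left; apply/eqP; ring.
Qed.

Lemma sq_le (x y : R) : x ^+ 2 <= y ^+ 2 -> 0 <= y -> x <= y.
Proof. move=> h y0; have [x0|x0] := lerP x 0; [exact: le_trans x0 y0|nra]. Qed.

Lemma cs_enorm {k} (u v : 'rV[R]_k) : dotv u v <= enorm u * enorm v.
Proof.
have h := cs_dot u v; rewrite -!enorm_sq -exprMn in h.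
apply: sq_le; first exact: h.
exact: mulr_ge0 (enorm_ge0 _) (enorm_ge0 _).
Qed.

Lemma enormZ {k} (c : R) (u : 'rV[R]_k) : enorm (c *: u) = `|c| * enorm u.
Proof. by rewrite /enorm dotvZl dotvZr mulrA -expr2 sqrtrM ?sqr_ge0 // sqrtr_sqr. Qed.

End Vec.

Section S2.
Context {R : realType}.
Lemma ineqK (t c r sg q : R) :
  t < c * r -> c^+2 + sg^+2 = 1 -> 0 <= sg ->
  t^+2 + q^+2 = r^+2 -> 0 <= q -> 0 <= r -> 0 <= c * q - sg * t.
Proof.
move=> htc hc hs htq hq hr.
have id : (c * q - sg * t) * (c * q + sg * t) = c^+2 * r^+2 - t^+2.
  have -> : (c * q - sg * t) * (c * q + sg * t) = c^+2 * q^+2 - sg^+2 * t^+2 by ring.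
  have -> : sg^+2 = 1 - c^+2 by rewrite -hc; ring.
  have -> : q^+2 = r^+2 - t^+2 by rewrite -htq; ring.
  ring.
have [t0|t0] := lerP 0 t.
  have cp : 0 < c.
    rewrite ltNge; apply/negP => cn.
    have : c * r <= 0 by nra.
    lra.
  have h1 : 0 < c^+2 * r^+2 - t^+2 by nra.
  have h2 : 0 <= c * q + sg * t by nra.
  nra.
have [c0|c0] := lerP 0 c.
  have h1 := mulr_ge0 c0 hq.
  have h2 : sg * t <= 0 by rewrite mulr_ge0_le0 // ltW.
  lra.
have cr0 : c * r <= 0 by rewrite mulr_le0_ge0 // ltW.
have h1 : c^+2 * r^+2 - t^+2 < 0.
  have -> : c^+2 * r^+2 - t^+2 = (c * r - t) * (c * r + t) by ring.
  rewrite pmulr_rlt0 ?subr_gt0 //; lra.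
have h2 : c * q + sg * t <= 0 by nra.
nra.
Qed.

Lemma lbB (t c r g s sg q : R) :
  t < c * r -> c <= g -> g^+2 + s^+2 = 1 -> 0 <= s -> c^+2 + sg^+2 = 1 -> 0 <= sg ->
  t^+2 + q^+2 = r^+2 -> 0 <= q -> 0 <= r -> g * t + s * q <= c * t + sg * q.
Proof.
move=> htc hcg hg hs hc hsg htq hq hr.
have K := @ineqK t c r sg q htc hc hsg htq hq hr.
have E : 0 <= 1 - c * g - sg * s.
  have e : (c - g)^+2 + (sg - s)^+2 = (c^+2 + sg^+2) + (g^+2 + s^+2) - 2 * (c*g + sg*s) by ring.
  rewrite hc hg in e.
  have := sqr_ge0 (c - g); have := sqr_ge0 (sg - s). lra.
have id : sg * (c * t + sg * q - (g * t + s * q)) = (g - c) * (c * q - sg * t) + (1 - c * g - sg * s) * q.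
  have : sg * (c * t + sg * q - (g * t + s * q)) = sg * c * t + sg^+2 * q - sg * g * t - sg * s * q by ring.
  move=> ->; rewrite (_ : sg^+2 = 1 - c^+2); last by rewrite -hc; ring.
  ring.
have [sp|s0] := ltrP 0 sg.
  have : 0 <= sg * (c * t + sg * q - (g * t + s * q)) by rewrite id; nra.
  nra.
have sz : sg = 0 by apply/eqP; rewrite eq_le s0 hsg.
have c2 : c^+2 = 1 by rewrite -hc sz expr0n /= addr0.
have [cp|cn] := lerP 0 c.
  have c1 : c = 1 by nra.
  have g1 : g = 1 by nra.
  have s0' : s = 0 by nra.
  by rewrite s0' g1 c1 sz; lra.
have c1 : c = -1 by nra.
rewrite c1 mulN1r in htc.
have h : 0 < (- t - r) * (- t + r) by apply: mulr_gt0; lra.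
have := sqr_ge0 q.
have e : (- t - r) * (- t + r) = t^+2 - r^+2 by ring.
lra.
Qed.


Lemma ubB (al be t c r sg q : R) :
  be^+2 <= sg^+2 * (r^+2 - al^+2) -> al <= t ->
  t < c * r -> c^+2 + sg^+2 = 1 -> 0 <= sg ->
  t^+2 + q^+2 = r^+2 -> 0 <= q -> 0 <= r -> c * al + be <= c * t + sg * q.
Proof.
move=> hb hal htc hc hsg htq hq hr.
have K := @ineqK t c r sg q htc hc hsg htq hq hr.
have tr : - r <= t.
  have [//|tn] := lerP (- r) t.
  have h : 0 < (- t - r) * (- t + r) by apply: mulr_gt0; lra.
  have := sqr_ge0 q.
  have e : (- t - r) * (- t + r) = t^+2 - r^+2 by ring.
  lra.
have N : 0 <= sg * q + c * (t - al).
  have [c0|c0] := lerP 0 c.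
    have := mulr_ge0 hsg hq; have : 0 <= c * (t - al) by apply: mulr_ge0; lra.
    lra.
  have [sp|s0] := ltrP 0 sg; last first.
    have sz : sg = 0 by apply/eqP; rewrite eq_le s0 hsg.
    have c2 : c^+2 = 1 by rewrite -hc sz expr0n /= addr0.
    have c1 : c = -1 by nra.
    rewrite c1 mulN1r in htc; lra.
  have ar : - r <= al.
    have h1 : 0 <= r^+2 - al^+2.
      have h2 : 0 <= sg^+2 * (r^+2 - al^+2) by apply: le_trans hb; exact: sqr_ge0.
      by move: h2; rewrite pmulr_rge0 // exprn_gt0.
    have [//|an] := lerP (- r) al.
    have h : 0 < (- al - r) * (- al + r) by apply: mulr_gt0; lra.
    have e : (- al - r) * (- al + r) = al^+2 - r^+2 by ring.
    lra.
  have h1 : c * (t + r) <= c * (t - al) by apply: ler_wnM2l; [exact: ltW | lra].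
  suff : - c * (t + r) <= sg * q by lra.
  apply: sq_le; last exact: mulr_ge0.
  have e1 : (sg * q)^+2 - (- c * (t + r))^+2 = (t + r) * (sg^+2 * (r - t) - c^+2 * (r + t)).
    have -> : (sg * q)^+2 = sg^+2 * q^+2 by ring.
    have -> : q^+2 = (r - t) * (r + t).
      have -> : q^+2 = r^+2 - t^+2 by rewrite -htq; ring.
      ring.
    ring.
  have e2 : sg^+2 * (r - t) - c^+2 * (r + t) = r * (1 - 2 * c^+2) - t.
    have -> : sg^+2 = 1 - c^+2 by rewrite -hc; ring.
    ring.
  have e3 : 0 <= r * (1 - 2 * c^+2) - t.
    have : r * (1 - 2 * c^+2) - t >= r * (1 - 2 * c^+2 - c) by lra.
    have : 0 <= r * ((1 - 2 * c) * (1 + c)).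
      apply: mulr_ge0 => //; apply: mulr_ge0; nra.
    have e4 : r * ((1 - 2 * c) * (1 + c)) = r * (1 - 2 * c^+2 - c) by ring.
    lra.
  have : 0 <= (t + r) * (sg^+2 * (r - t) - c^+2 * (r + t)) by rewrite e2; apply: mulr_ge0 => //; lra.
  lra.
apply: (@le_trans _ _ (c * al + (sg * q + c * (t - al)))); last by lra.
rewrite lerD2l; apply: sq_le => //.
apply: le_trans hb _.
have e : (sg * q + c * (t - al))^+2 - sg^+2 * (r^+2 - al^+2) = 2 * sg * (t - al) * (c * q - sg * t) + (t - al)^+2.
  have -> : r^+2 = t^+2 + q^+2 by rewrite htq.
  have -> : (t - al)^+2 = (c^+2 + sg^+2) * (t - al)^+2 by rewrite hc mul1r.
  ring.
have : 0 <= 2 * sg * (t - al) * (c * q - sg * t).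
  apply: mulr_ge0 => //; apply: mulr_ge0; [apply: mulr_ge0 => //| lra].
have := sqr_ge0 (t - al).
lra.
Qed.
End S2.

Section Phi.
Variables (R : realType) (n m : nat) (a : 'rV[R]_n) (d : 'rV[R]_m) (lam : 'rV[R]_n).
Hypotheses (ha : enorm a = 1) (hd : enorm d <= 1) (hlam : enorm lam = 1).

Let c := dotv lam a.
Let sg := Num.sqrt (1 - c ^+ 2).
Let w := lam - c *: a.
Let tt (y : 'rV[R]_m) := - dotv d y.
Let qq (y : 'rV[R]_m) := Num.sqrt (dotv y y - dotv d y ^+ 2).

Let aa1 : dotv a a = 1. Proof. by rewrite -enorm_sq ha expr1n. Qed.
Let ll1 : dotv lam lam = 1. Proof. by rewrite -enorm_sq hlam expr1n. Qed.
Let dd1 : dotv d d <= 1.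
Proof. by rewrite -enorm_sq expr2 -[1]mulr1; apply: ler_pM => //; exact: enorm_ge0. Qed.
Let c2le : c ^+ 2 <= 1.
Proof. by have := cs_dot lam a; rewrite ll1 aa1 mulr1. Qed.
Let sg_ge0 : 0 <= sg. Proof. exact: sqrtr_ge0. Qed.
Let sg2 : sg ^+ 2 = 1 - c ^+ 2. Proof. by rewrite sqr_sqrtr // subr_ge0. Qed.
Let csg : c ^+ 2 + sg ^+ 2 = 1. Proof. by rewrite sg2; ring. Qed.
Let aw0 : dotv a w = 0.
Proof. by rewrite /w dotvBr dotvZr aa1 mulr1 dotvC subrr. Qed.
Let ww : dotv w w = sg ^+ 2.
Proof.
rewrite /w !(dotvBl, dotvBr, dotvZl, dotvZr) ll1 aa1 (dotvC a lam) sg2 -/c; ring.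
Qed.
Let lw : dotv lam w = sg ^+ 2.
Proof. by rewrite /w dotvBr dotvZr ll1 sg2 -/c expr2. Qed.
Let dy2 y : dotv d y ^+ 2 <= dotv y y.
Proof. have := cs_dot d y; have : 0 <= (1 - dotv d d) * dotv y y by apply: mulr_ge0; [rewrite subr_ge0; exact: dd1 | exact: dotvv_ge0]. lra. Qed.
Let qq_ge0 y : 0 <= qq y. Proof. exact: sqrtr_ge0. Qed.
Let qq2 y : qq y ^+ 2 = dotv y y - dotv d y ^+ 2.
Proof. by rewrite sqr_sqrtr // subr_ge0. Qed.
Let tq y : tt y ^+ 2 + qq y ^+ 2 = enorm y ^+ 2.
Proof. by rewrite qq2 enorm_sq /tt sqrrN; ring. Qed.

Definition ES (y : 'rV[R]_m) := [set dotv lam x | x in [set x | Sle0 a d (x, y)]].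

Lemma ES_ne y : ES y !=set0.
Proof.
exists (dotv lam (- enorm y *: a)), (- enorm y *: a) => //.
rewrite /Sle0 /=; split.
  by rewrite enormZ ha mulr1 normrN ger0_norm // enorm_ge0.
rewrite dotvZr aa1 mulr1.
have := cs_enorm d y; have : 0 <= (1 - enorm d) * enorm y by apply: mulr_ge0; [rewrite subr_ge0 | exact: enorm_ge0]. lra.
Qed.

Lemma ES_ub y : ubound (ES y) (enorm y).
Proof.
move=> z [x [hx _] <-].
by apply: le_trans (cs_enorm lam x) _; rewrite hlam mul1r.
Qed.

Lemma phi_ge y x : Sle0 a d (x, y) -> dotv lam x <= phi a d lam y.
Proof. by move=> h; apply: ub_le_sup; [exists (enorm y); exact: ES_ub | exists x]. Qed.

Lemma phi_le y : phi a d lam y <= enorm y.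
Proof. exact: ge_sup (ES_ne y) (ES_ub y). Qed.


Lemma LB g s : g ^+ 2 + s ^+ 2 = 1 -> 0 <= s -> c <= g ->
  forall y, g * tt y + s * qq y <= phi a d lam y.
Proof.
move=> hg hs hcg y.
clearbody w.
have r0 := enorm_ge0 y.
have htq := tq y.
have hq := qq_ge0 y.
have [hA|hB] := lerP (c * enorm y) (tt y).
  apply: le_trans (@phi_ge y (enorm y *: lam) _).
    rewrite dotvZr ll1 mulr1; apply: sq_le => //.
    have e : (g * tt y + s * qq y) ^+ 2 + (g * qq y - s * tt y) ^+ 2
       = (g ^+ 2 + s ^+ 2) * (tt y ^+ 2 + qq y ^+ 2) by ring.
    rewrite hg htq mul1r in e.
    have := sqr_ge0 (g * qq y - s * tt y); lra.
  rewrite /Sle0 /=; split.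
    by rewrite enormZ hlam mulr1 ger0_norm.
  rewrite dotvZr (dotvC a lam) -/c.
  move: hA; rewrite /tt; lra.
set x := tt y *: a + (qq y / sg) *: w.
have xa : dotv a x = tt y.
  by rewrite /x dotvDr !dotvZr aa1 aw0 !mulr0 mulr1 addr0.
have xl : dotv lam x = c * tt y + sg * qq y.
  rewrite /x dotvDr !dotvZr lw -/c.
  have [s0|sn] := eqVneq sg 0; first by rewrite s0; ring.
  by field.
have xx : dotv x x <= enorm y ^+ 2.
  rewrite /x !(dotvDl, dotvDr, dotvZl, dotvZr) (dotvC w a) aa1 aw0 ww -htq.
  have [s0|sn] := eqVneq sg 0.
    rewrite s0 !(expr0n, mulr0, mul0r, invr0) /=; have := sqr_ge0 (qq y); lra.
  have -> : qq y / sg * (qq y / sg * sg ^+ 2) = qq y ^+ 2 by field.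
  lra.
apply: le_trans (@phi_ge y x _).
  rewrite xl; exact: lbB hB hcg hg hs csg sg_ge0 htq hq r0.
rewrite /Sle0 /=; split.
  by apply: sq_le => //; rewrite enorm_sq.
by rewrite xa /tt addNr.
Qed.

Lemma UB y x : Sle0 a d (x, y) -> exists g s,
  [/\ g ^+ 2 + s ^+ 2 = 1, 0 <= s, c <= g & dotv lam x <= g * tt y + s * qq y].
Proof.
case=> /= hx hax.
have r0 := enorm_ge0 y.
have htq := tq y.
have hq := qq_ge0 y.
have lx : dotv lam x <= enorm y.
  by apply: le_trans (cs_enorm lam x) _; rewrite hlam mul1r.
have c1 : c <= 1 by have := c2le; nra.
have [hA|hB] := lerP (c * enorm y) (tt y).
  have [r00|rp] := eqVneq (enorm y) 0.
    exists 1, 0; split => //; first by rewrite expr1n expr0n addr0.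
    rewrite mul1r mul0r addr0; move: hA; rewrite r00 mulr0 => hA.
    by apply: le_trans lx _; rewrite r00.
  have rpos : 0 < enorm y by rewrite lt_neqAle eq_sym rp r0.
  exists (tt y / enorm y), (qq y / enorm y); split.
  - rewrite !expr_div_n -mulrDl htq divff //; exact: expf_neq0.
  - exact: divr_ge0.
  - by rewrite ler_pdivlMr.
  - have -> : tt y / enorm y * tt y + qq y / enorm y * qq y = enorm y.
      transitivity ((tt y ^+ 2 + qq y ^+ 2) / enorm y); first by field.
      by rewrite htq; field.
    exact: lx.
exists c, sg; split => //.
have e : dotv lam x = c * dotv a x + dotv w x.
  by rewrite /w dotvBl dotvZl (dotvC a x); ring.
clearbody w.
rewrite e; apply: (@ubB _ (dotv a x) (dotv w x) (tt y) c (enorm y) sg (qq y)) => //; last first.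
  by move: hax; rewrite /tt; lra.
have h := cs_dot w (x - dotv a x *: a).
rewrite !(dotvBl, dotvBr, dotvZl, dotvZr) in h.
rewrite ?(dotvC w a) ?(dotvC x a) ?aw0 ?ww ?aa1 in h.
move: h; rewrite mulr0 subr0 mulr1 subrr mulr0 subr0 -expr2 => h.
apply: le_trans h _; apply: ler_wpM2l; first exact: sqr_ge0.
rewrite lerD2r -enorm_sq.
by rewrite expr2 [X in _ <= X]expr2; apply: ler_pM => //; exact: enorm_ge0.
Qed.

Lemma qq_sub (k l : R) (u v : 'rV[R]_m) : 0 <= k -> 0 <= l ->
  qq (k *: u + l *: v) <= k * qq u + l * qq v.
Proof.
move=> k0 l0.
have cs : (dotv u v - dotv d u * dotv d v) ^+ 2 <=
          (dotv u u - dotv d u ^+ 2) * (dotv v v - dotv d v ^+ 2).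
  apply: quad_cs; first by rewrite subr_ge0.
  move=> x; have := dy2 (u + x *: v); rewrite -subr_ge0.
  rewrite !(dotvDl, dotvDr, dotvZl, dotvZr) (dotvC v u).
  by move=> h; apply: le_trans h _; rewrite le_eqVlt; apply/orP; left; apply/eqP; ring.
have Buv : dotv u v - dotv d u * dotv d v <= qq u * qq v.
  apply: sq_le; last by apply: mulr_ge0.
  by rewrite exprMn !qq2.
apply: sq_le; last by apply: addr_ge0; apply: mulr_ge0.
rewrite qq2 !(dotvDl, dotvDr, dotvZl, dotvZr) (dotvC v u).
have e : (k * qq u + l * qq v) ^+ 2 = k ^+ 2 * qq u ^+ 2 + 2 * k * l * (qq u * qq v) + l ^+ 2 * qq v ^+ 2 by ring.
rewrite e !qq2.
have : 0 <= 2 * k * l * (qq u * qq v - (dotv u v - dotv d u * dotv d v)).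
  by apply: mulr_ge0; [apply: mulr_ge0; [apply: mulr_ge0|] | rewrite subr_ge0].
set A := dotv u u; set B := dotv u v; set C := dotv v v; set P := dotv d u; set Q := dotv d v.
set Z := qq u * qq v.
move=> h.
have -> : k * (k * A + l * B) + l * (k * B + l * C) - (k * P + l * Q) ^+ 2 =
  k ^+ 2 * (A - P ^+ 2) + 2 * k * l * (B - P * Q) + l ^+ 2 * (C - Q ^+ 2) by ring.
lra.
Qed.

Lemma phi_conv (k : R) (y1 y2 : 'rV[R]_m) : 0 <= k -> k <= 1 ->
  phi a d lam (k *: y1 + (1 - k) *: y2) <= k * phi a d lam y1 + (1 - k) * phi a d lam y2.
Proof.
move=> k0 k1; apply: ge_sup; first exact: ES_ne.
move=> z [x hx <-].
have [g [s [hg hs hcg hle]]] := @UB _ x hx.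
apply: le_trans hle _.
have k1' : 0 <= 1 - k by rewrite subr_ge0.
have ht : tt (k *: y1 + (1 - k) *: y2) = k * tt y1 + (1 - k) * tt y2.
  by rewrite /tt dotvDr !dotvZr; ring.
have hq := @qq_sub k (1 - k) y1 y2 k0 k1'.
have L1 := @LB g s hg hs hcg y1.
have L2 := @LB g s hg hs hcg y2.
rewrite ht.
have : s * qq (k *: y1 + (1 - k) *: y2) <= s * (k * qq y1 + (1 - k) * qq y2) by apply: ler_wpM2l.
have : k * (g * tt y1 + s * qq y1) <= k * phi a d lam y1 by apply: ler_wpM2l.
have : (1 - k) * (g * tt y2 + s * qq y2) <= (1 - k) * phi a d lam y2 by apply: ler_wpM2l.
set P1 := phi a d lam y1; set P2 := phi a d lam y2.
set T1 := tt y1; set T2 := tt y2; set Q1 := qq y1; set Q2 := qq y2.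
set Q0 := qq _.
move=> h1 h2 h3.
have e : g * (k * T1 + (1 - k) * T2) + s * (k * Q1 + (1 - k) * Q2) =
  k * (g * T1 + s * Q1) + (1 - k) * (g * T2 + s * Q2) by ring.
lra.
Qed.

End Phi.

Section Topo.
Context {R : realType}.

Lemma entry_sq {k} (u : 'rV[R]_k) j : u 0 j ^+ 2 <= dotv u u.
Proof.
rewrite /dotv (bigD1 j) //= -expr2 lerDl.
by apply: sumr_ge0 => i _; rewrite -expr2 sqr_ge0.
Qed.

Lemma entry_le {k} (u : 'rV[R]_k) j : `|u 0 j| <= enorm u.
Proof.
apply: sq_le; last exact: enorm_ge0.
by rewrite real_normK ?num_real // enorm_sq entry_sq.
Qed.

Lemma enorm_small {k} (v : 'rV[R]_k) e : 0 < e -> (forall j, `|v 0 j| < e) ->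
  enorm v <= k%:R * e.
Proof.
move=> e0 h; apply: sq_le; last by apply: mulr_ge0 => //; exact: ltW.
rewrite enorm_sq.
have h1 : dotv v v <= k%:R * e ^+ 2.
  rewrite /dotv; apply: le_trans (_ : \sum_(i < k) e ^+ 2 <= _).
    apply: ler_sum => i _; rewrite -expr2 -real_normK ?num_real //.
    by rewrite expr2 [X in _ <= X]expr2; apply: ler_pM => //; exact: ltW.
  by rewrite sumr_const card_ord mulr_natl.
apply: le_trans h1 _; rewrite exprMn ler_wpM2r ?sqr_ge0 //.
case: k {v h} => [|k]; first by rewrite expr0n.
by rewrite expr2 ler_peMr // ler1n.
Qed.

Lemma enorm_tri {k} (u v : 'rV[R]_k) : enorm (u + v) <= enorm u + enorm v.
Proof.
apply: sq_le; last by apply: addr_ge0; exact: enorm_ge0.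
rewrite enorm_sq !(dotvDl, dotvDr) (dotvC v u) sqrrD !enorm_sq.
have := cs_enorm u v; lra.
Qed.

Lemma V_open {n m} (lam : 'rV[R]_n) (hlam : enorm lam = 1) (p : 'rV[R]_n * 'rV[R]_m) :
  enorm p.2 < dotv lam p.1 -> exists2 e, 0 < e &
    ball p e `<=` [set q | enorm q.2 < dotv lam q.1].
Proof.
move=> hp; set g := dotv lam p.1 - enorm p.2.
have g0 : 0 < g by rewrite subr_gt0.
have hn0 : 0 <= n%:R :> R by rewrite ler0n.
have hm0 : 0 <= m%:R :> R by rewrite ler0n.
have N0 : 0 < n%:R + m%:R + 1 :> R by lra.
exists (g / (n%:R + m%:R + 1)); first exact: divr_gt0.
set e := g / _.
have e0 : 0 < e by exact: divr_gt0.
case=> x y [/= [_ bx] [_ by']].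
have hx : enorm (p.1 - x) <= n%:R * e.
  apply: enorm_small => // j; have := bx 0 j; rewrite /ball /= !mxE.
  by [].
have hy : enorm (y - p.2) <= m%:R * e.
  apply: enorm_small => // j; have := by' 0 j; rewrite /ball /= !mxE distrC.
  by [].
have l1 : dotv lam p.1 - dotv lam x <= enorm (p.1 - x).
  by rewrite -dotvBr; apply: le_trans (cs_enorm _ _) _; rewrite hlam mul1r.
have l2 : enorm y <= enorm p.2 + enorm (y - p.2).
  by rewrite -{1}(subrK p.2 y) addrC; exact: enorm_tri.
have e1 : (n%:R + m%:R) * e = g - e by rewrite /e; field; rewrite gt_eqF.
rewrite mulrDl in e1.
have gd : g = dotv lam p.1 - enorm p.2 by [].
rewrite /=; lra.
Qed.

Lemma conv_ball {n m} (C : set (convex_lmodType ('rV[R]_n * 'rV[R]_m)%type))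
  (p c : 'rV[R]_n * 'rV[R]_m) (e s : R) :
  convex_set C -> C p -> ball c e `<=` C -> 0 < s -> s <= 1 ->
  ball (s *: c + (1 - s) *: p) (s * e) `<=` C.
Proof.
move=> cC Cp bC s0 s1 z hz.
set c' := c + s^-1 *: (z - (s *: c + (1 - s) *: p)).
have hc' : ball c e c'.
  move: hz => [/= [se h1] [_ h2]].
  have e0 : 0 < e by rewrite -(pmulr_rgt0 _ s0).
  split; split => //= i j; rewrite /ball /= !mxE.
  + have := h1 i j; rewrite /ball /= !mxE.
    set u := _ - _; move=> hu.
    rewrite (_ : _ - _ = - (s^-1 * (z.1 i j - (s * c.1 i j + (1 - s) * p.1 i j)))); last by ring.
    rewrite normrN normrM gtr0_norm ?invr_gt0 // distrC.
    by rewrite ltr_pdivrMl // (_ : `|_| = `|u|) //.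
  + have := h2 i j; rewrite /ball /= !mxE.
    set u := _ - _; move=> hu.
    rewrite (_ : _ - _ = - (s^-1 * (z.2 i j - (s * c.2 i j + (1 - s) * p.2 i j)))); last by ring.
    rewrite normrN normrM gtr0_norm ?invr_gt0 // distrC.
    by rewrite ltr_pdivrMl // (_ : `|_| = `|u|) //.
have -> : z = s *: c' + (1 - s) *: p.
  rewrite /c' scalerDr scalerA mulfV ?gt_eqF // scale1r.
  set A := s *: c; set B := (1 - s) *: p.
  by rewrite opprD !addrA subrK [A + z]addrC addrK.
have := cC c' p (Itv01 (ltW s0) s1).
rewrite !inE /=; apply; [exact: bC | exact: Cp].
Qed.

End Topo.

Theorem proposition6 (R : realType) (n m : nat) (hn : (1 <= n)%N) (hm : (1 <= m)%N)
  (a : 'rV[R]_n) (d : 'rV[R]_m) (ha : enorm a = 1) (hd : enorm d <= 1)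
  (lam : 'rV[R]_n) (hlam : enorm lam = 1) :
  maxSfree (Sle0 a d) (Cphi a d lam) /\
  (forall (xb : 'rV[R]_n) (yb : 'rV[R]_m),
     ~ Sle0 a d (xb, yb) ->
     dotv a xb + dotv d yb <= 0 ->
     lam = (enorm xb)^-1 *: xb ->
     interior (Cphi a d lam) (xb, yb)).
Proof.
have ll : dotv lam lam = 1 by rewrite -enorm_sq hlam expr1n.
have VC : forall q : 'rV[R]_n * 'rV[R]_m, enorm q.2 < dotv lam q.1 -> Cphi a d lam q.
  move=> q hq; rewrite /Cphi /=; apply: le_trans (ltW hq).
  exact: (@phi_le R n m a d lam ha hd hlam).
split; last first.
  move=> xb yb hnS hle hl.
  have hxy : enorm yb < enorm xb.
    by rewrite ltNge; apply/negP => h; apply: hnS; split.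
  have xp : 0 < enorm xb by apply: le_lt_trans hxy; exact: enorm_ge0.
  have hlx : dotv lam xb = enorm xb.
    rewrite hl dotvZl -enorm_sq; field; exact: lt0r_neq0.
  have hV : enorm (xb, yb).2 < dotv lam (xb, yb).1 by rewrite /= hlx.
  have [e e0 bV] := @V_open R n m lam hlam (xb, yb) hV.
  apply/nbhs_ballP; exists e => // q /bV; exact: VC.
split.
  split.
    move=> p q l; rewrite !inE => hp hq.
    change (phi a d lam (l%:num *: p.2 + (1 - l%:num) *: q.2) <=
            dotv lam (l%:num *: p.1 + (1 - l%:num) *: q.1)).
    have l0 : 0 <= l%:num by apply: ge0.
    have l1 : l%:num <= 1 by apply: le1.
    apply: le_trans (@phi_conv R n m a d lam ha hd hlam l%:num p.2 q.2 l0 l1) _.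
    rewrite dotvDr !dotvZr.
    have := ler_wpM2l l0 hp.
    have : 0 <= 1 - l%:num by rewrite subr_ge0.
    move=> l1'; have := ler_wpM2l l1' hq.
    lra.
  apply/seteqP; split => [[x y] [hi hs]|//].
  have [e e0 bC] := (nbhs_ballP _ _).1 hi.
  have e20 : 0 < e / 2 by rewrite divr_gt0.
  have hb : ball (x, y) e (x - (e / 2) *: lam, y).
    split; last exact: ballxx.
    split => // i j; rewrite (ord1 i) /ball /= !mxE.
    rewrite (_ : _ - _ = e / 2 * lam 0 j); last by ring.
    rewrite normrM gtr0_norm //.
    have := entry_le lam j; rewrite hlam => hj.
    have : e / 2 * `|lam 0 j| <= e / 2 by rewrite ler_piMr // ltW.
    lra.
  have := bC _ hb; rewrite /Cphi /= dotvBr dotvZr ll mulr1.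
  have := @phi_ge R n m a d lam hlam y x hs.
  lra.
move=> C' [cC' hC'] sub.
apply/seteqP; split => [[x0 y0] hp|]; last exact: sub.
rewrite /Cphi /= leNgt; apply/negP => hlt.
have [z [xs hxs <-] hz] := sup_gt (@ES_ne R n m a d lam ha hd y0) hlt.
set D := dotv lam xs - dotv lam x0.
have D0 : 0 < D by rewrite subr_gt0.
set K := `|enorm y0 - dotv lam x0|.
have K0 : 0 <= K := normr_ge0 _.
have DK : 0 < D + K + 1 by lra.
set s := D / (D + K + 1).
have s0 : 0 < s by apply: divr_gt0.
have s1 : s <= 1 by rewrite ler_pdivrMr // mul1r; lra.
set cx := x0 + s^-1 *: (xs - x0).
have hcx : enorm y0 < dotv lam cx.
  rewrite /cx dotvDr dotvZr dotvBr -/D.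
  have -> : s^-1 * D = D + K + 1 by rewrite /s invf_div divfK // lt0r_neq0.
  have : enorm y0 - dotv lam x0 <= K by exact: ler_norm.
  lra.
have [e e0 bV] := @V_open R n m lam hlam (cx, y0) hcx.
have bC' : ball (cx, y0) e `<=` C' by move=> q /bV /VC /sub.
have hB := @conv_ball R n m C' (x0, y0) (cx, y0) e s cC' hp bC' s0 s1.
have eq : s *: ((cx, y0) : 'rV[R]_n * 'rV[R]_m) + (1 - s) *: (x0, y0) = (xs, y0).
  change ((s *: cx + (1 - s) *: x0, s *: y0 + (1 - s) *: y0) = (xs, y0)).
  congr pair.
    apply/rowP => j; rewrite /cx !mxE; field; exact: lt0r_neq0.
  by apply/rowP => j; rewrite !mxE; ring.
rewrite eq in hB.
have hi : interior C' (xs, y0).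
  by apply/nbhs_ballP; exists (s * e) => //; exact: mulr_gt0.
have : (interior C' `&` Sle0 a d) (xs, y0) by split.
by rewrite hC'.
Qed.
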